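(* If $w\in S_n$ is fireworks, then $\mathrm{rajcode}(w)=\mathrm{wt}(\overline{D(w)})$.
   Context: Permutations are written in one-line notation. The decreasing runs of $w$ are the maximal consecutive decreasing segments of the one-line notation; $w$ is fireworks if the initial elements of its decreasing runs occur in increasing order. The Rajchgot code $\mathrm{rajcode}(w)=(r_1,\ldots,r_n)$: for each $j$ choose an increasing subsequence of $w(j),\ldots,w(n)$ containing $w(j)$ of greatest length among such subsequences, and let $r_j$ be the number of terms omitted. The Rothe diagram is $D(w)=\{(i,j)\in[n]^2: i<w^{-1}(j),\ j<w(i)\}$ ($i$ is the row, $j$ the column). For a diagram $D\subseteq[n]^2$, its upper closure is $\overline{D}=\{(i,j): i\le i' \text{ for some } (i',j)\in D\}$, and $\mathrm{wt}(D)\in\mathbb{Z}^n$ has $i$-th entry the number of boxes of $D$ in row $i$. *)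

(* Defs.v *)
(* Permutations of [n] are elements of 'S_n = {perm 'I_n};
   positions and values are 0-based: the one-line notation of w is
   w(0) w(1) ... w(n-1). *)
From mathcomp Require Import all_boot all_order all_fingroup.
Set Implicit Arguments. Unset Strict Implicit. Unset Printing Implicit Defensive.

Definition run_start n (w : 'S_n) (i : 'I_n) : bool :=
  [|| val i == 0%N | [exists k : 'I_n, ((val k).+1 == val i) && (w k < w i)]].

Definition fireworks n (w : 'S_n) : bool :=
  [forall i : 'I_n, forall j : 'I_n,
     [&& run_start w i, run_start w j & i < j] ==> (w i < w j)].

(* S is (the set of positions of) an increasing subsequence of w(j),...,w(n-1)
   containing w(j) *)
Definition incr_from n (w : 'S_n) (j : 'I_n) (S : {set 'I_n}) : bool :=
  [&& j \in S, [forall a in S, j <= a] &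
      [forall a in S, forall b in S, (a < b) ==> (w a < w b)]].

Definition lis_from n (w : 'S_n) (j : 'I_n) : nat :=
  \max_(S : {set 'I_n} | incr_from w j S) #|S|.

(* r_j = number of terms of w(j),...,w(n-1) omitted *)
Definition rajcode n (w : 'S_n) : {ffun 'I_n -> nat} :=
  [ffun j : 'I_n => (n - val j) - lis_from w j].

(* Rothe diagram, (row, column) *)
Definition rothe n (w : 'S_n) : {set 'I_n * 'I_n} :=
  [set p : 'I_n * 'I_n | (p.1 < (w^-1)%g p.2) && (p.2 < w p.1)].

Definition upper_closure n (D : {set 'I_n * 'I_n}) : {set 'I_n * 'I_n} :=
  [set p : 'I_n * 'I_n | [exists i' : 'I_n, ((i', p.2) \in D) && (p.1 <= i')]].

Definition wt n (D : {set 'I_n * 'I_n}) : {ffun 'I_n -> nat} :=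
  [ffun i : 'I_n => #|[set p in D | p.1 == i]|].

(* Main.v *)
Require Import Defs.
From mathcomp Require Import all_boot all_order all_fingroup.
Set Implicit Arguments. Unset Strict Implicit. Unset Printing Implicit Defensive.

Lemma card_ge n (i : 'I_n) : #|[set k : 'I_n | i <= k]| = n - i.
Proof.
rewrite cardsE cardE /enum_mem size_filter -enumT.
rewrite -(count_map val (leq i)) val_enum_ord.
have hi : (i <= n)%N by apply: ltnW.
move: (val i) hi => m hi.
rewrite -{1}(subnKC hi) iotaD count_cat add0n.
rewrite (eq_in_count (a2 := pred0)); last by move=> x; rewrite mem_iota add0n /= => h; rewrite leqNgt h.
rewrite count_pred0 add0n (eq_in_count (a2 := predT)); last by move=> x; rewrite mem_iota /= => /andP[h _].
by rewrite count_predT size_iota.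
Qed.

Section S.
Variables (n : nat) (w : 'S_n).
Hypothesis fw : fireworks w.

Lemma fwP (i j : 'I_n) : run_start w i -> run_start w j -> i < j -> w i < w j.
Proof. by move=> a b c; move/forallP: fw => /(_ i)/forallP/(_ j); rewrite a b c. Qed.

Lemma not_rs (p q : 'I_n) : (val q).+1 = val p -> ~~ run_start w p -> w p <= w q.
Proof.
move=> e; rewrite /run_start negb_or => /andP[_ /existsP nex].
by rewrite leqNgt; apply/negP => h; apply: nex; exists q; rewrite e eqxx h.
Qed.

Lemma below_rs m : forall (i' p : 'I_n), val i' = m -> i' < p -> run_start w p -> w i' < w p.
Proof.
elim: m => [|m IH] i' p e lt rs.
  by apply: fwP => //; rewrite /run_start e.
case rsi: (run_start w i'); first by apply: fwP.
have hm : (m < n)%N by apply: ltn_trans (ltn_ord i'); rewrite e.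
have := not_rs (q := Ordinal hm) (esym e) (negbT rsi).
move=> h; apply: leq_ltn_trans h _; apply: IH => //=.
by apply: ltn_trans lt; rewrite e.
Qed.

Lemma dec_run d : forall (p q : 'I_n), val q = val p + d ->
  (forall r : 'I_n, p < r <= q -> ~~ run_start w r) -> w q <= w p.
Proof.
elim: d => [|d IH] p q e h.
  by rewrite addn0 in e; rewrite (val_inj e).
have hm : (p + d < n)%N by apply: leq_ltn_trans (ltn_ord q); rewrite e addnS leqnSn.
apply: (@leq_trans (w (Ordinal hm))).
  apply: not_rs; first by rewrite /= e addnS.
  by apply: h; rewrite e addnS leqnn andbT ltnS leq_addr.
apply: IH => //= r /andP[a b]; apply: h; rewrite a /=.
by apply: (leq_trans b); rewrite e leq_add2l.
Qed.

End S.

Section M.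
Variables (n : nat) (w : 'S_n).

Definition Rec (i : 'I_n) : {set 'I_n} :=
  [set k : 'I_n | (i <= k) && [forall i' : 'I_n, ((i <= i') && (i' < k)) ==> ~~ (w k < w i')]].

Lemma RecP (i k : 'I_n) : reflect ((i <= k) /\ forall i' : 'I_n, i <= i' -> i' < k -> w i' <= w k) (k \in Rec i).
Proof.
rewrite inE; apply: (iffP andP) => [[a /forallP b]|[a b]]; split => //.
  by move=> i' c d; have := b i'; rewrite c d /= -leqNgt.
by apply/forallP => i'; apply/implyP => /andP[c d]; rewrite -leqNgt; apply: b.
Qed.

Lemma i_in_Rec (i : 'I_n) : i \in Rec i.
Proof. by apply/RecP; split => // i' a b; move: (leq_trans b a); rewrite ltnn. Qed.

Lemma lis_ge (i : 'I_n) : #|Rec i| <= lis_from w i.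
Proof.
apply: (@leq_bigmax_cond _ (fun S => incr_from w i S) (fun S => #|S|)).
apply/and3P; split; first exact: i_in_Rec.
  by apply/forallP => a; apply/implyP => /RecP[].
apply/forallP => a; apply/implyP => aR; apply/forallP => b; apply/implyP => /RecP[_ h].
apply/implyP => ab; have := h a (proj1 (RecP _ _ aR)) ab.
rewrite leq_eqVlt => /orP[/eqP e|//].
have := perm_inj (val_inj e); move=> abe; by rewrite abe ltnn in ab.
Qed.

Hypothesis fw : fireworks w.

Lemma rs_Rec (i r : 'I_n) : i < r -> run_start w r -> r \in Rec i.
Proof.
move=> ir rs; apply/RecP; split; first exact: ltnW.
by move=> i' _ h; apply: ltnW; apply: (below_rs fw (erefl _)).
Qed.

Lemma lis_le (i : 'I_n) : lis_from w i <= #|Rec i|.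
Proof.
apply/bigmax_leqP => S /and3P[iS /forallP geS /forallP incS].
pose f (a : 'I_n) := fintype.arg_max i (fun k => (k \in Rec i) && (k <= a)) val.
have fP a : a \in S -> (f a \in Rec i) /\ f a <= a /\ forall j, j \in Rec i -> j <= a -> j <= f a.
  move=> aS; have Pi : (i \in Rec i) && (i <= a) by rewrite i_in_Rec; exact: (implyP (geS a) aS).
  rewrite /f; case: (@fintype.arg_maxnP _ i (fun k => (k \in Rec i) && (k <= a)) val Pi) => k /andP[kR ka] mx.
  by split => //; split => // j jR ja; apply: mx; rewrite jR ja.
have noinj a b : a \in S -> b \in S -> a < b -> f a = f b -> False.
  move=> aS bS ab e.
  have [kR [ka _]] := fP a aS; have [_ [_ mx]] := fP b bS.
  have wab : w a < w b by have := forallP (implyP (incS a) aS) b; move/implyP/(_ bS)/implyP; apply.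
  have : w b <= w a.
    apply: (@dec_run _ w (b - a)); first by rewrite /= subnKC // ltnW.
    move=> r /andP[ar rb]; apply/negP => rs.
    have rR : r \in Rec i.
      apply: rs_Rec rs; apply: leq_ltn_trans ar.
      by apply: leq_trans ka; case/RecP: kR.
    have := mx r rR rb; rewrite -e => rk.
    by have := leq_ltn_trans (leq_trans rk ka) ar; rewrite ltnn.
  by rewrite leqNgt wab.
rewrite -(card_in_imset (f := f)).
  apply: subset_leq_card; apply/subsetP => _ /imsetP[a aS ->]; by case: (fP a aS).
move=> a b aS bS e; case: (ltngtP a b) => h.
- by case: (noinj a b aS bS h e).
- by case: (noinj b a bS aS h (esym e)).
- exact: val_inj.
Qed.

End M.

Lemma Bcard n (w : 'S_n) (i : 'I_n) :
  #|[set k : 'I_n | [exists i' : 'I_n, [&& i <= i', i' < k & w k < w i']]]| = (n - i) - #|Rec w i|.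
Proof.
rewrite -card_ge.
have e : [set k : 'I_n | i <= k] :&: Rec w i = Rec w i.
  by apply/setIidPr/subsetP => k /RecP[h _]; rewrite inE.
rewrite -e -cardsD; apply: eq_card => k; rewrite in_setD !in_set.
have -> : ((i <= k) && [forall i' : 'I_n, (i <= i' < k) ==> ~~ (w k < w i')]) = (k \in Rec w i) by rewrite inE.
apply/existsP/andP => [[i' /and3P[a b c]]|[/negP nR ik]].
  split; last exact: leq_trans (ltnW b).
  by apply/negP => /RecP[_ h]; have := h i' a b; rewrite leqNgt c.
have : ~~ [forall i' : 'I_n, ((i <= i') && (i' < k)) ==> ~~ (w k < w i')].
  by apply/negP => h; apply: nR; rewrite inE ik h.
rewrite negb_forall => /existsP[i' h]; exists i'.
by move: h; rewrite negb_imply negbK andbA.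
Qed.

Lemma wtE n (w : 'S_n) (i : 'I_n) :
  wt (upper_closure (rothe w)) i =
  #|[set k : 'I_n | [exists i' : 'I_n, [&& i <= i', i' < k & w k < w i']]]|.
Proof.
rewrite ffunE -(card_imset _ (f := fun k => (i, w k))); last first.
  by move=> a b [] /perm_inj.
apply: eq_card => -[a j]; rewrite !inE /=.
apply/andP/imsetP => [[/existsP[i' /andP[]]] |[k]].
  rewrite inE /= => /andP[h1 h2] h3 /eqP ea; subst a.
  exists ((w^-1)%g j); last by rewrite permKV.
  by rewrite inE; apply/existsP; exists i'; rewrite h3 h1 permKV h2.
rewrite inE => /existsP[i' /and3P[a1 a2 a3]] [-> ->]; split => //.
by apply/existsP; exists i'; rewrite a1 inE /= permK a2 a3.
Qed.

Theorem lemma3p13 (n : nat) (w : 'S_n) :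
  fireworks w -> rajcode w = wt (upper_closure (rothe w)).
Proof.
move=> fw; apply/ffunP => i; rewrite wtE Bcard ffunE.
congr (_ - _); apply/eqP; rewrite eqn_leq lis_ge andbT; exact: lis_le.
Qed.
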